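(* Let $m\ge 2$ be even and $n\ge 2$, and let $\mathcal{P}$ be the $m$th order $n$-dimensional Pascal tensor. Then $\mathcal{P}$ is a positive semi-definite tensor and an SOS tensor. Furthermore, if the determinant $f(m,n)=\det(\mathcal{P})$ is nonzero, then $\mathcal{P}$ is a positive definite tensor.
   Context: The $m$th order $n$-dimensional Pascal tensor is $\mathcal{P}=(p_{i_1\dots i_m})$ with $p_{i_1\dots i_m}=\frac{(i_1+\dots+i_m-m)!}{(i_1-1)!\cdots(i_m-1)!}$ for $i_1,\dots,i_m\in\{1,\dots,n\}$ (for $m=2$ this is the symmetric Pascal matrix). For a symmetric $m$th order $n$-dimensional real tensor $\mathcal{A}=(a_{i_1\dots i_m})$ and $\mathbf{x}\in\mathbb{R}^n$, let $\mathcal{A}\mathbf{x}^m=\sum_{i_1,\dots,i_m}a_{i_1\dots i_m}x_{i_1}\cdots x_{i_m}$, and let $\mathcal{A}\mathbf{x}^{m-1}\in\mathbb{R}^n$ be the vector with $i$th component $\sum_{i_2,\dots,i_m}a_{i i_2\dots i_m}x_{i_2}\cdots x_{i_m}$. For $m$ even, $\mathcal{A}$ is positive semi-definite if $\mathcal{A}\mathbf{x}^m\ge 0$ for all $\mathbf{x}\in\mathbb{R}^n$, positive definite if $\mathcal{A}\mathbf{x}^m>0$ for all nonzero $\mathbf{x}\in\mathbb{R}^n$, and an SOS tensor if the polynomial $\mathcal{A}\mathbf{x}^m$ is a sum of squares of polynomials in $x_1,\dots,x_n$. The determinant $\det(\mathcal{A})$ is the (multivariate) resultant of the system of $n$ homogeneous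 polynomials $\mathcal{A}\mathbf{x}^{m-1}=\mathbf{0}$. *)

(* Defs.v *)
From HB Require Import structures.
From mathcomp Require Import all_boot all_order all_algebra.
From mathcomp Require Import complex.
From mathcomp Require Import mpoly.
Set Implicit Arguments. Unset Strict Implicit. Unset Printing Implicit Defensive.
Import Order.TTheory GRing.Theory Num.Theory.
Local Open Scope ring_scope.

(* An m-th order n-dimensional tensor over R. Indices are 0-based:
   a multi-index (i_1,...,i_m) is a function f : 'I_m -> 'I_n, and the
   paper's index i_k in {1..n} corresponds to (f k).+1. *)
Definition tensor (R : Type) (m n : nat) := {ffun 'I_m -> 'I_n} -> R.

(* Pascal tensor: p_{i_1..i_m} = (i_1+...+i_m-m)! / ((i_1-1)!...(i_m-1)!),
   written with 0-based indices j_k = i_k - 1. *)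
Definition pascal (F : fieldType) (m n : nat) : tensor F m n :=
  fun f => ((\sum_(k < m) (f k : nat))`!)%:R / (\prod_(k < m) ((f k : nat)`!)%:R).

Arguments pascal : clear implicits.

Definition tform (R : comNzRingType) m n (A : tensor R m n) (x : 'I_n -> R) : R :=
  \sum_(f : {ffun 'I_m -> 'I_n}) A f * \prod_(k < m) x (f k).

Definition tvec (R : comNzRingType) m n (A : tensor R m n) (x : 'I_n -> R)
    (i : 'I_n) : R :=
  \sum_(f : {ffun 'I_m -> 'I_n} | [forall k : 'I_m, (val k == 0%N) ==> (f k == i)])
     A f * \prod_(k < m | val k != 0%N) x (f k).

Definition tpoly (R : comNzRingType) m n (A : tensor R m n) : {mpoly R[n]} :=
  \sum_(f : {ffun 'I_m -> 'I_n}) A f *: \prod_(k < m) 'X_(f k).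

Definition is_psd (R : realDomainType) m n (A : tensor R m n) : Prop :=
  forall x : 'I_n -> R, 0 <= tform A x.

Definition is_pd (R : realDomainType) m n (A : tensor R m n) : Prop :=
  forall x : 'I_n -> R, (exists i, x i != 0) -> 0 < tform A x.

Definition is_sos (R : comNzRingType) m n (A : tensor R m n) : Prop :=
  exists s : seq {mpoly R[n]}, tpoly A = \sum_(p <- s) p ^+ 2.

(* det(A) <> 0 : the multivariate resultant of the system A x^{m-1} = 0
   is nonzero, i.e. (defining property of the resultant over the algebraic
   closure) the system has no nontrivial common zero over C. *)
Definition tdet_nonzero (C : comNzRingType) m n (A : tensor C m n) : Prop :=
  forall x : 'I_n -> C, (forall i, tvec A x i = 0) -> forall i, x i = 0.

(* Main.v *)
Require Import Defs.
From HB Require Import structures.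
From mathcomp Require Import all_boot all_order all_algebra.
From mathcomp Require Import complex mpoly.
From mathcomp Require Import ring.
Set Implicit Arguments. Unset Strict Implicit. Unset Printing Implicit Defensive.
Import Order.TTheory GRing.Theory Num.Theory.
Local Open Scope ring_scope.

Definition join (r n : nat) (g1 g2 : {ffun 'I_r -> 'I_n}) : {ffun 'I_(r + r) -> 'I_n} :=
  [ffun i => match fintype.split i with inl a => g1 a | inr b => g2 b end].

Lemma joinL r n (g1 g2 : {ffun 'I_r -> 'I_n}) a : join g1 g2 (lshift r a) = g1 a.
Proof. by rewrite ffunE (unsplitK (inl _ a)). Qed.

Lemma joinR r n (g1 g2 : {ffun 'I_r -> 'I_n}) b : join g1 g2 (rshift r b) = g2 b.
Proof. by rewrite ffunE (unsplitK (inr _ b)). Qed.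

Lemma bigjoin (T : Type) (idx : T) (op : Monoid.law idx) r n
   (g1 g2 : {ffun 'I_r -> 'I_n}) (F : 'I_n -> T) :
  \big[op/idx]_(k < r + r) F (join g1 g2 k) =
  op (\big[op/idx]_(a < r) F (g1 a)) (\big[op/idx]_(b < r) F (g2 b)).
Proof.
rewrite big_split_ord; f_equal; apply: eq_bigr => a _; by rewrite ?joinL ?joinR.
Qed.

Lemma sum_join (S : nmodType) r n (F : {ffun 'I_(r + r) -> 'I_n} -> S) :
  \sum_f F f = \sum_g1 \sum_g2 F (join g1 g2).
Proof.
rewrite pair_big /=.
rewrite (reindex (fun p : {ffun 'I_r -> 'I_n} * {ffun 'I_r -> 'I_n} => join p.1 p.2)) //=.
exists (fun f => ([ffun a => f (lshift r a)], [ffun b => f (rshift r b)])).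
  move=> [g1 g2] _ /=; congr pair; apply/ffunP => a; by rewrite ffunE ?joinL ?joinR.
move=> f _ /=; apply/ffunP => i; rewrite ffunE.
case: splitP => j Hj; rewrite ffunE; congr (f _); apply: val_inj => //=.
Qed.

Definition sg r n (g : {ffun 'I_r -> 'I_n}) : nat := \sum_(i < r) (g i : nat).

Definition qq (R : numFieldType) r n (g : {ffun 'I_r -> 'I_n}) : R :=
  ((sg g)`!)%:R / (\prod_(i < r) ((g i : nat)`!)%:R).

Lemma prod_fact_neq0 (R : numFieldType) r n (g : {ffun 'I_r -> 'I_n}) :
  (\prod_(i < r) ((g i : nat)`!)%:R : R) != 0.
Proof.
rewrite -natr_prod pnatr_eq0 -lt0n; apply: prodn_gt0 => i; exact: fact_gt0.
Qed.

Lemma pascal_join (R : numFieldType) r n (g1 g2 : {ffun 'I_r -> 'I_n}) :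
  pascal R (r + r) n (join g1 g2) =
  qq R g1 * qq R g2 * ('C(sg g1 + sg g2, sg g1))%:R.
Proof.
rewrite /pascal /qq.
rewrite (bigjoin _ _ _ (fun j : 'I_n => (j : nat))).
rewrite (bigjoin _ _ _ (fun j : 'I_n => ((j : nat)`!)%:R : R)).
rewrite -/(sg g1) -/(sg g2).
have := @prod_fact_neq0 R _ _ g1; have := @prod_fact_neq0 R _ _ g2.
set P1 := \prod_(i < r) _; set P2 := \prod_(i < r) _ => h2 h1.
rewrite -(bin_fact (leq_addr (sg g2) (sg g1))) addKn !natrM.
rewrite -[X in _ / X]/(P2 * P1).
by field; rewrite h1 h2.
Qed.

Lemma binsum a b K : (a < K)%N -> 'C(a + b, a) = (\sum_(k < K) 'C(a, k) * 'C(b, k))%N.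
Proof.
move=> hK; rewrite -binomial.Vandermonde.
transitivity (\sum_(j < a.+1) 'C(a, j) * 'C(b, j))%N.
  rewrite (reindex_inj rev_ord_inj) /=; apply: eq_bigr => j _.
  have hj : (j <= a)%N by rewrite -ltnS.
  by rewrite subSS bin_sub // subKn.
rewrite (big_ord_widen K (fun j => 'C(a, j) * 'C(b, j))%N hK) big_mkcond /=.
apply: eq_bigr => j _; case: ltnP => // h; by rewrite bin_small.
Qed.

Lemma sg_lt r n (g : {ffun 'I_r -> 'I_n}) : (sg g < (r * n).+1)%N.
Proof.
rewrite ltnS /sg; apply: leq_trans (_ : \sum_(i < r) n <= _)%N.
  by apply: leq_sum => i _; apply: ltnW.
by rewrite sum_nat_const card_ord.
Qed.

Lemma key (R : numFieldType) (S : comNzRingType) (phi : {rmorphism R -> S}) r n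
   (P1 : pred {ffun 'I_r -> 'I_n}) (Y1 Y2 : {ffun 'I_r -> 'I_n} -> S) :
  \sum_(g1 | P1 g1) \sum_g2 phi (pascal R (r + r) n (join g1 g2)) * (Y1 g1 * Y2 g2) =
  \sum_(k < (r * n).+1)
     (\sum_(g1 | P1 g1) phi (qq R g1 * ('C(sg g1, k))%:R) * Y1 g1) *
     (\sum_g2 phi (qq R g2 * ('C(sg g2, k))%:R) * Y2 g2).
Proof.
have E g1 g2 : phi (pascal R (r + r) n (join g1 g2)) =
   \sum_(k < (r * n).+1) phi (qq R g1 * ('C(sg g1, k))%:R) * phi (qq R g2 * ('C(sg g2, k))%:R).
  rewrite pascal_join (binsum _ (sg_lt g1)) natr_sum mulr_sumr rmorph_sum.
  by apply: eq_bigr => k _; rewrite -rmorphM natrM; congr (phi _); ring.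
under eq_bigr => g1 _ do under eq_bigr => g2 _ do rewrite E mulr_suml.
under [RHS]eq_bigr => k _ do rewrite mulr_suml.
symmetry.
under eq_bigr => k _ do under eq_bigr => g1 _ do rewrite mulr_sumr.
rewrite exchange_big /=; apply: eq_bigr => g1 _.
rewrite exchange_big /=; apply: eq_bigr => g2 _.
by apply: eq_bigr => k _; ring.
Qed.

Definition QQ (R : numFieldType) (S : comNzRingType) (phi : {rmorphism R -> S}) r n
  (y : 'I_n -> S) (k : nat) : S :=
  \sum_(g : {ffun 'I_r -> 'I_n}) phi (qq R g * ('C(sg g, k))%:R) * \prod_(a < r) y (g a).

Lemma form_sos (R : numFieldType) (S : comNzRingType) (phi : {rmorphism R -> S}) r n
   (y : 'I_n -> S) :
  \sum_(f : {ffun 'I_(r + r) -> 'I_n}) phi (pascal R (r + r) n f) * \prod_(k < r + r) y (f k) =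
  \sum_(k < (r * n).+1) (QQ phi r y k) ^+ 2.
Proof.
rewrite sum_join.
under eq_bigr => g1 _ do under eq_bigr => g2 _ do rewrite bigjoin.
rewrite (key phi xpredT (fun g => \prod_(a < r) y (g a)) (fun g => \prod_(a < r) y (g a))).
by apply: eq_bigr => k _; rewrite expr2.
Qed.

Lemma vec_dec (R : numFieldType) (S : comNzRingType) (phi : {rmorphism R -> S}) s n
   (y : 'I_n -> S) (i : 'I_n) :
  \sum_(f : {ffun 'I_(s.+1 + s.+1) -> 'I_n} | [forall k : 'I_(s.+1 + s.+1), (val k == 0%N) ==> (f k == i)])
     phi (pascal R _ n f) * \prod_(k < s.+1 + s.+1 | val k != 0%N) y (f k) =
  \sum_(k < (s.+1 * n).+1)
     (\sum_(g1 : {ffun 'I_s.+1 -> 'I_n} | g1 ord0 == i)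
         phi (qq R g1 * ('C(sg g1, k))%:R) * \prod_(a < s.+1 | val a != 0%N) y (g1 a)) *
     QQ phi s.+1 y k.
Proof.
rewrite big_mkcond sum_join.
transitivity (\sum_(g1 : {ffun 'I_s.+1 -> 'I_n} | g1 ord0 == i) \sum_g2
   phi (pascal R _ n (join g1 g2)) *
   ((\prod_(a < s.+1 | val a != 0%N) y (g1 a)) * \prod_(b < s.+1) y (g2 b))); last first.
  exact: key.
rewrite [RHS]big_mkcond; apply: eq_bigr => g1 _.
have C g2 : [forall k : 'I_(s.+1 + s.+1), (val k == 0%N) ==> (join g1 g2 k == i)] = (g1 ord0 == i).
  apply/forallP/eqP.
    move=> H; move/implyP: (H (lshift s.+1 ord0)) => /(_ erefl)/eqP.
    by rewrite joinL.
  move=> H k; apply/implyP => /eqP hk.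
  have -> : k = lshift s.+1 ord0 by apply: val_inj.
  by rewrite joinL H.
under eq_bigr => g2 _ do rewrite C.
case: (g1 ord0 == i); last by rewrite big1.
apply: eq_bigr => g2 _; congr (_ * _).
rewrite big_mkcond big_split_ord [in RHS](big_mkcond (fun a : 'I_s.+1 => val a != 0%N)).
congr (_ * _); apply: eq_bigr => a _; by rewrite ?joinL ?joinR.
Qed.
Unset Implicit Arguments.

Theorem theorem2p1 (R : rcfType) (m n : nat) :
  ~~ odd m -> (2 <= m)%N -> (2 <= n)%N ->
  [/\ is_psd (pascal R m n),
      is_sos (pascal R m n) &
      (tdet_nonzero (pascal (complex R) m n) -> is_pd (pascal R m n))].
Proof.
move=> hodd hm hn.
have [s ->] : exists s, m = (s.+1 + s.+1)%N.
  exists (m./2).-1; rewrite prednK ?addnn.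
    by rewrite -{1}(odd_double_half m) (negbTE hodd).
  by case: m hm hodd => [|[|m]].
clear hodd hm.
have Ftf : forall x : 'I_n -> R, tform (pascal R (s.+1 + s.+1) n) x =
    \sum_(k < (s.+1 * n).+1) (QQ (idfun : {rmorphism R -> R}) s.+1 x k) ^+ 2.
  by move=> x; exact: (form_sos (idfun : {rmorphism R -> R}) s.+1 x).
split.
- move=> x; rewrite Ftf; apply: sumr_ge0 => k _; exact: sqr_ge0.
- pose Y : 'I_n -> {mpoly R[n]} := fun i => 'X_i.
  pose Q := fun k : 'I_(s.+1 * n).+1 => QQ (mpolyC n (R:=R)) s.+1 Y k.
  exists (seq.map Q (index_enum 'I_(s.+1 * n).+1)).
  rewrite big_map /tpoly /Q.
  rewrite -(form_sos (mpolyC n (R:=R)) s.+1 Y).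
  by apply: eq_bigr => f _; rewrite mul_mpolyC.
- move=> Hdet x [i0 hi0].
  have Hge : 0 <= \sum_(k < (s.+1 * n).+1) QQ (idfun : {rmorphism R -> R}) s.+1 x k ^+ 2.
    by apply: sumr_ge0 => k _; exact: sqr_ge0.
  rewrite lt_def Ftf Hge andbT; apply/negP => /eqP H0.
  have HQ (k : 'I_(s.+1 * n).+1) : QQ (idfun : {rmorphism R -> R}) s.+1 x k = 0.
    have := @psumr_eq0P _ _ _ _ (fun i _ => sqr_ge0 _) H0 k isT.
    by move/eqP; rewrite sqrf_eq0 => /eqP.
  have PC f : pascal (complex R) _ n f = real_complex R (pascal R (s.+1 + s.+1) n f).
    by rewrite /pascal -!natr_prod fmorph_div !rmorph_nat.
  have QC k : QQ (real_complex R) s.+1 (fun i => real_complex R (x i)) k =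
              real_complex R (QQ (idfun : {rmorphism R -> R}) s.+1 x k).
    rewrite /QQ rmorph_sum; apply: eq_bigr => g _.
    rewrite -[RHS]/(real_complex R (qq R g * 'C(sg g, k)%:R * \prod_(a < s.+1) x (g a))).
    by rewrite !rmorphM rmorph_prod.
  suff : real_complex R (x i0) = 0.
    by move/eqP; rewrite fmorph_eq0 (negbTE hi0).
  apply: (Hdet (fun i => real_complex R (x i))).
  move=> i; rewrite /tvec.
  under eq_bigr => f _ do rewrite PC.
  rewrite (vec_dec (real_complex R) s (fun i => real_complex R (x i))).
  by apply: big1 => k _; rewrite QC HQ rmorph0 mulr0.
Qed.
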